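(* For any string $\mathcal S\in\Sigma^n$ and any order-preserving permutation $\pi$ for $\mathcal S$, for every $i>1$ it holds $\mathrm{LPF}_\pi[i]\ge\mathrm{LPF}_\pi[i-1]-1$. In particular, the sequence $i+\mathrm{LPF}_\pi[i]$, for $i=1,\dots,n$, is nondecreasing.
   Context: For $i\ne j$, $\mathrm{rlce}(i,j)$ is the length of the longest common prefix of $\mathcal S[i,n]$ and $\mathcal S[j,n]$. A permutation $\pi:[n]\to[n]$ is order-preserving for $\mathcal S$ if for all $i,j\in[n-1]$, $\pi(i)<\pi(j)$ and $\mathcal S[i,i+1]=\mathcal S[j,j+1]$ imply $\pi(i+1)<\pi(j+1)$. $\mathrm{LPF}_\pi[i]=0$ if $\pi(i)=1$, else $\mathrm{LPF}_\pi[i]=\max_{\pi(j)<\pi(i)}\mathrm{rlce}(j,i)$. *)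

(* Defs.v *)
From mathcomp Require Import all_boot all_fingroup.
Set Implicit Arguments. Unset Strict Implicit. Unset Printing Implicit Defensive.

(* Strings S in Sigma^n are n.-tuples over an eqType Sigma; positions are
   0-indexed ordinals 'I_n (position k here = position k+1 in the paper). *)

Fixpoint lcp (Sigma : eqType) (s t : seq Sigma) : nat :=
  match s, t with
  | x :: s', y :: t' => if x == y then (lcp s' t').+1 else 0
  | _, _ => 0
  end.

Definition rlce (Sigma : eqType) (n : nat) (S : n.-tuple Sigma) (i j : 'I_n) : nat :=
  lcp (drop i S) (drop j S).

Definition order_preserving (Sigma : eqType) (n : nat) (S : n.-tuple Sigma)
    (pi : {perm 'I_n}) : Prop :=
  forall (i j i1 j1 : 'I_n), val i1 = i.+1 -> val j1 = j.+1 ->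
    pi i < pi j -> tnth S i = tnth S j -> tnth S i1 = tnth S j1 ->
    pi i1 < pi j1.

Definition LPF (Sigma : eqType) (n : nat) (S : n.-tuple Sigma)
    (pi : {perm 'I_n}) (i : 'I_n) : nat :=
  if val (pi i) == 0 then 0
  else \max_(j : 'I_n | pi j < pi i) rlce S j i.

(* Main.v *)
Require Import Defs.
From mathcomp Require Import all_boot all_fingroup.
From mathcomp Require Import zify.

Lemma rlce_step (Sigma : eqType) (n : nat) (S : n.-tuple Sigma) (k j : 'I_n) :
  1 < rlce S k j ->
  exists (k1 j1 : 'I_n), [/\ val k1 = k.+1, val j1 = j.+1, tnth S k = tnth S j,
     tnth S k1 = tnth S j1 & rlce S k j = (rlce S k1 j1).+1].
Proof.
rewrite /rlce => H.
have x0 := tnth S k.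
have sz : size S = n by rewrite size_tuple.
rewrite (drop_nth x0 (_ : val k < size S)) ?sz ?ltn_ord // in H *.
rewrite (drop_nth x0 (_ : val j < size S)) ?sz ?ltn_ord // in H *.
rewrite /= in H *.
case: eqP H => // Ekj H.
have hk : k.+1 < n.
  case: (ltnP k.+1 n) => // hk; move: H; rewrite drop_oversize ?sz //.
have hj : j.+1 < n.
  case: (ltnP j.+1 n) => // hj; move: H; rewrite (drop_oversize (s:=S) (n:=j.+1)) ?sz //.
  by case: (drop _ _).
exists (Ordinal hk), (Ordinal hj); split => //.
- by rewrite !(tnth_nth x0).
- rewrite !(tnth_nth x0) /=.
  move: H; rewrite (drop_nth x0 (_ : k.+1 < size S)) ?sz //.
  rewrite (drop_nth x0 (_ : j.+1 < size S)) ?sz //= .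
  by case: eqP.
Qed.

Lemma step1 (Sigma : eqType) (n : nat) (S : n.-tuple Sigma)
    (pi : {perm 'I_n}) :
  order_preserving S pi ->
  forall i j : 'I_n, val i = (val j).+1 -> LPF S pi j <= (LPF S pi i).+1.
Proof.
move=> op i j Hij.
rewrite {1}/LPF; case: eqP => // _.
apply/bigmax_leqP => k Hk.
case: (leqP (rlce S k j) 1) => [h|h]; first by lia.
have [k1 [j1 [E1 E2 E3 E4 E5]]] := @rlce_step _ _ S k j h.
have ej : j1 = i by apply/val_inj; rewrite E2 Hij.
subst j1.
have lt : pi k1 < pi i by apply: (op k j k1 i).
rewrite E5 ltnS /LPF.
case: eqP => [e|_]; first by move: lt; rewrite e.
exact: (leq_bigmax_cond (F := fun k => rlce S k i)).
Qed.

Theorem lemma11 (Sigma : eqType) (n : nat) (S : n.-tuple Sigma)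
    (pi : {perm 'I_n}) :
  order_preserving S pi ->
  (forall i j : 'I_n, val i = (val j).+1 -> LPF S pi j - 1 <= LPF S pi i) /\
  (forall i j : 'I_n, i <= j -> i + LPF S pi i <= j + LPF S pi j).
Proof.
move=> op; split.
  move=> i j H; have := @step1 _ _ S pi op i j H; lia.
suff: forall d (i j : 'I_n), val j = i + d -> i + LPF S pi i <= j + LPF S pi j.
  move=> h i j ij; apply: (h (j - i)); by rewrite subnKC.
elim=> [|d IH] i j E.
  by have -> : j = i by apply/val_inj; rewrite E addn0.
have hj : (j.-1 < n) by have := ltn_ord j; lia.
have e1 : val (Ordinal hj) = i + d by rewrite /= E addnS.
have e2 : val j = (val (Ordinal hj)).+1 by rewrite e1 E addnS.
have := IH i (Ordinal hj) e1.
have := @step1 _ _ S pi op j (Ordinal hj) e2.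
move: e1 e2; rewrite /=; lia.
Qed.
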